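(* Let $X,Y$ be finite nonempty sets, $A\in\{0,1\}^{X\times Y}$, $\delta,\epsilon>0$, integers $k,\ell\ge1$, and assume $\|A\|_{U(k,\ell)}\ge(1+\epsilon)\delta$. Then at least one of the following holds: (1) $|\{x\in X:\deg_A(x)\ge\delta\}|\ge\frac{\epsilon}{2}\delta^{k\ell}|X|$; (2) $k>1$ and there is $x\in X$ with $\deg_A(x)\ge\delta^k$ and $\|A_x\|_{U(k-1,\ell)}\ge(1+\epsilon)\delta$.
   Context: $\deg_A(x)=\frac{1}{|Y|}\sum_{y\in Y}A(x,y)$. $Y_x=\{y\in Y:A(x,y)=1\}$ and $A_x=A[X,Y_x]$ is the submatrix of $A$ with all rows and columns $Y_x$. The $(k,\ell)$-grid norm of $M\in\mathbb{R}_{\ge0}^{X\times Y'}$ is $\|M\|_{U(k,\ell)}=\big(\mathbb{E}_{x_1,\dots,x_k\in X,\,y_1,\dots,y_\ell\in Y'}\prod_{i\in[k],j\in[\ell]}M(x_i,y_j)\big)^{1/(k\ell)}$, expectations over independent uniform choices. *)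

(* Defs.v *)
From HB Require Import structures.
From mathcomp Require Import all_boot all_order all_algebra.
From mathcomp Require Import reals exp.
Set Implicit Arguments. Unset Strict Implicit. Unset Printing Implicit Defensive.
Import Order.TTheory GRing.Theory Num.Theory.
Local Open Scope ring_scope.

Definition deg (R : realType) (X Y : finType) (A : X -> Y -> bool) (x : X) : R :=
  (\sum_(y : Y) (A x y)%:R) / #|Y|%:R.

Definition Ycol (X Y : finType) (A : X -> Y -> bool) (x : X) : {set Y} :=
  [set y | A x y].

(* E_{x_1..x_k in X, y_1..y_l in S} prod_{i,j} A(x_i,y_j), for the
   submatrix A[X,S] (uniform independent choices). *)
Definition gridE (R : realType) (X Y : finType) (k l : nat)
    (A : X -> Y -> bool) (S : {set Y}) : R :=
  (\sum_(xs : {ffun 'I_k -> X})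
     \sum_(ys : {ffun 'I_l -> Y} | [forall j, ys j \in S])
        \prod_(i < k) \prod_(j < l) (A (xs i) (ys j))%:R)
  / (#|X|%:R ^+ k * #|S|%:R ^+ l).

Definition gridnorm (R : realType) (X Y : finType) (k l : nat)
    (A : X -> Y -> bool) (S : {set Y}) : R :=
  powR (gridE R k l A S) (1 / (k * l)%:R).

(* Main.v *)
Require Import Defs.
From HB Require Import structures.
From mathcomp Require Import all_boot all_order all_algebra.
From mathcomp Require Import reals exp.
From mathcomp Require Import ring lra.
Import Order.TTheory GRing.Theory Num.Theory.
Local Open Scope ring_scope.

Lemma prod_bool (R : realType) (I : finType) (b : I -> bool) :
  \prod_i ((b i)%:R : R) = ([forall i, b i])%:R.
Proof.
case: (boolP [forall i, b i]) => [/forallP H|].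
  by rewrite big1 // => i _; rewrite H.
rewrite negb_forall => /existsP [i Hi].
by rewrite (bigD1 i) //= (negbTE Hi) mul0r.
Qed.

Lemma sum_bool (R : realType) (Y : finType) (b : Y -> bool) :
  \sum_y ((b y)%:R : R) = #|[set y | b y]|%:R.
Proof.
rewrite -sumr_const [RHS]big_mkcond; apply: eq_bigr => y _; rewrite inE.
by case: (b y).
Qed.

Definition gsum (R : realType) (X Y : finType) (k l : nat)
    (A : X -> Y -> bool) (S : {set Y}) : R :=
  \sum_(xs : {ffun 'I_k -> X})
     \sum_(ys : {ffun 'I_l -> Y} | [forall j, ys j \in S])
        \prod_(i < k) \prod_(j < l) (A (xs i) (ys j))%:R.

Lemma widen_lift k (j : 'I_k) : widen_ord (leqnSn k) j = lift ord_max j.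
Proof. by apply: val_inj; rewrite /= /bump leqNgt ltn_ord. Qed.

Arguments gsum R {X Y} k l A S.

Definition gext (X : finType) k (p : X * {ffun 'I_k -> X}) : {ffun 'I_k.+1 -> X} :=
  [ffun i => if unlift ord_max i is Some j then p.2 j else p.1].

Lemma gext_bij (X : finType) k : bijective (@gext X k).
Proof.
exists (fun f : {ffun 'I_k.+1 -> X} =>
  (f ord_max, [ffun j : 'I_k => f (widen_ord (leqnSn k) j)])).
  move=> [x f] /=; rewrite /gext ffunE unlift_none; congr pair.
  apply/ffunP => j; rewrite !ffunE.
  rewrite widen_lift.
  by rewrite liftK.
move=> f; apply/ffunP => i; rewrite /gext ffunE.
case: unliftP => [j ->|-> //]; rewrite ffunE; congr (f _).
by rewrite widen_lift.
Qed.

Lemma gsum_dec (R : realType) (X Y : finType) k l (A : X -> Y -> bool) :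
  gsum R k.+1 l A [set: Y] = \sum_x gsum R k l A (Ycol A x).
Proof.
rewrite /gsum (reindex (@gext X k)); last exact: onW_bij (gext_bij X k).
rewrite [RHS]pair_bigA /=; apply: eq_bigr => [[x f]] _ /=.
rewrite [RHS]big_mkcond /=.
rewrite (eq_bigl predT); last by move=> ys; apply/forallP => j; rewrite in_setT.
apply: eq_bigr => ys _.
rewrite big_ord_recr /=.
have -> : \prod_(j < l) ((A (@gext X k (x, f) ord_max) (ys j))%:R : R) =
   ([forall j, ys j \in Ycol A x])%:R.
  rewrite prod_bool /gext ffunE unlift_none; congr (_%:R).
  congr (nat_of_bool _); by apply/idP/idP => /forallP H; apply/forallP => j; move: (H j); rewrite inE.
case: ifP => _; last by rewrite mulr0.
rewrite mulr1; apply: eq_bigr => i _; apply: eq_bigr => j _.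
rewrite /gext ffunE /=.
rewrite widen_lift.
by rewrite liftK.
Qed.

Lemma gsum_ge0 (R : realType) (X Y : finType) k l (A : X -> Y -> bool) S :
  0 <= gsum R k l A S.
Proof.
apply: sumr_ge0 => xs _; apply: sumr_ge0 => ys _.
apply: prodr_ge0 => i _; apply: prodr_ge0 => j _; exact: ler0n.
Qed.

Lemma gsum_le (R : realType) (X Y : finType) k l (A : X -> Y -> bool) S :
  gsum R k l A S <= #|X|%:R ^+ k * #|S|%:R ^+ l.
Proof.
rewrite /gsum.
apply: le_trans (_ : \sum_(xs : {ffun 'I_k -> X})
   \sum_(ys : {ffun 'I_l -> Y} | ys \in ffun_on S) (1 : R) <= _).
  apply: ler_sum => xs _.
  rewrite (eq_bigl (fun ys : {ffun 'I_l -> Y} => ys \in ffun_on S)); last first.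
    by move=> ys; apply/forallP/ffun_onP.
  apply: ler_sum => ys _; apply: prodr_ile1 => i _.
  rewrite prodr_ge0 ?prodr_ile1 // => j _; rewrite ?ler0n //.
  by case: (A _ _); rewrite ?ler01 ?lexx ?ler0n.
under eq_bigr do rewrite sumr_const card_ffun_on card_ord.
rewrite sumr_const card_ffun card_ord.
by rewrite -[_ *+ (_ ^ _)]mulr_natr !natrX mulrC.
Qed.

Lemma gridE_gsum (R : realType) (X Y : finType) k l (A : X -> Y -> bool) S :
  gridE R k l A S = gsum R k l A S / (#|X|%:R ^+ k * #|S|%:R ^+ l).
Proof. by []. Qed.

Lemma term_eq (R : realType) (X Y : finType) k l (A : X -> Y -> bool) x :
  (0 < #|X|)%N -> (0 < #|Y|)%N -> (1 <= l)%N ->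
  deg R A x ^+ l * gridE R k l A (Ycol A x)
  = gsum R k l A (Ycol A x) / (#|X|%:R ^+ k * #|Y|%:R ^+ l).
Proof.
move=> hX hY hl.
rewrite gridE_gsum /deg sum_bool -/(Ycol A x).
have := @gsum_le R X Y k l A (Ycol A x); have := @gsum_ge0 R X Y k l A (Ycol A x).
case: (posnP #|Ycol A x|) => [->|hs] g0 gle.
  have -> : gsum R k l A (Ycol A x) = 0.
    apply/eqP; rewrite eq_le g0 andbT; apply: (le_trans gle).
    by rewrite expr0n eqn0Ngt hl /= mulr0.
  by rewrite !mul0r mulr0.
have hX' : (#|X|%:R : R) != 0 by rewrite pnatr_eq0 -lt0n.
have hY' : (#|Y|%:R : R) != 0 by rewrite pnatr_eq0 -lt0n.
have hs' : (#|Ycol A x|%:R : R) != 0 by rewrite pnatr_eq0 -lt0n.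
rewrite expr_div_n; field.
by rewrite !expf_neq0.
Qed.

Lemma powR_inv_pow (R : realType) (t : R) m :
  0 <= t -> (0 < m)%N -> (t `^ (1 / m%:R)) ^+ m = t.
Proof.
move=> t0 m0; rewrite -powR_mulrn ?powR_ge0 // -powRrM mul1r mulVf ?powRr1 //.
by rewrite pnatr_eq0 -lt0n.
Qed.

Lemma gridE_ge0 (R : realType) (X Y : finType) k l (A : X -> Y -> bool) S :
  0 <= gridE R k l A S.
Proof.
by rewrite gridE_gsum divr_ge0 ?gsum_ge0 // mulr_ge0 // exprn_ge0 // ler0n.
Qed.

Lemma gridE_le1 (R : realType) (X Y : finType) k l (A : X -> Y -> bool) S :
  gridE R k l A S <= 1.
Proof.
rewrite gridE_gsum.
have D0 : 0 <= (#|X|%:R ^+ k * #|S|%:R ^+ l : R) by rewrite mulr_ge0 // exprn_ge0 // ler0n.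
case: (eqVneq (#|X|%:R ^+ k * #|S|%:R ^+ l : R) 0) => [->|hD].
  by rewrite invr0 mulr0 ler01.
rewrite ler_pdivrMr ?mul1r; last by rewrite lt_def hD D0.
exact: gsum_le.
Qed.

Lemma deg_ge0 (R : realType) (X Y : finType) (A : X -> Y -> bool) x :
  0 <= deg R A x.
Proof. by rewrite /deg divr_ge0 // ?sumr_ge0 // => y _; rewrite ler0n. Qed.

Lemma deg_le1 (R : realType) (X Y : finType) (A : X -> Y -> bool) x :
  (0 < #|Y|)%N -> deg R A x <= 1.
Proof.
move=> hY; rewrite /deg sum_bool ler_pdivrMr ?mul1r ?ltr0n // ler_nat.
exact: max_card.
Qed.

Lemma bern (R : realType) (x : R) n : 0 <= x -> (0 < n)%N -> 1 + x <= (1 + x) ^+ n.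
Proof.
move=> x0; case: n => // n _.
rewrite exprS ler_peMr ?exprn_ege1 ?lerDl //.
by rewrite addr_ge0.
Qed.

Theorem lemma4p2 (R : realType) (X Y : finType) (A : X -> Y -> bool)
    (delta eps : R) (k l : nat) :
  (0 < #|X|)%N -> (0 < #|Y|)%N -> 0 < delta -> 0 < eps ->
  (1 <= k)%N -> (1 <= l)%N ->
  (1 + eps) * delta <= gridnorm R k l A [set: Y] ->
  eps / 2 * delta ^+ (k * l) * #|X|%:R
    <= #|[set x : X | delta <= deg R A x]|%:R
  \/ ((1 < k)%N /\
      exists x : X, delta ^+ k <= deg R A x /\
        (1 + eps) * delta <= gridnorm R k.-1 l A (Ycol A x)).
Proof.
move=> hX hY hd he hk hl hn.
have hed : 0 <= (1 + eps) * delta.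
  by apply: mulr_ge0; [apply: addr_ge0; [exact: ler01| exact: ltW] | exact: ltW].
have t0 := @gridE_ge0 R X Y k l A [set: Y].
have ht : ((1 + eps) * delta) ^+ (k * l) <= gridE R k l A [set: Y].
  rewrite -[leRHS](@powR_inv_pow R _ (k * l) t0); last by rewrite muln_gt0 hk.
  apply: lerXn2r; last exact: hn.
    by rewrite nnegrE.
  by rewrite nnegrE powR_ge0.
case: k hk hn ht t0 => // k' _ hn ht t0.
case: (boolP [&& (1 < k'.+1)%N & [exists x, (delta ^+ k'.+1 <= deg R A x) &&
   ((1 + eps) * delta <= gridnorm R k' l A (Ycol A x))]]).
  move/andP => [h1 /existsP [x /andP [h2 h3]]]; right; split => //; by exists x.
move=> hneg; left.
have key : forall x, (1 < k'.+1)%N -> delta ^+ k'.+1 <= deg R A x ->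
    gridnorm R k' l A (Ycol A x) < (1 + eps) * delta.
  move=> x h1 h2; rewrite ltNge; apply/negP => h3; move/negP: hneg; apply.
  by rewrite h1 /=; apply/existsP; exists x; rewrite h2 h3.
set B := (1 + eps) ^+ (k' * l) * delta ^+ (k'.+1 * l).
have a1 : 1 <= (1 + eps) ^+ (k' * l) by rewrite exprn_ege1 // lerDl ltW.
have B0 : 0 <= B := mulr_ge0 (le_trans ler01 a1) (exprn_ge0 _ (ltW hd)).
have bound : forall x, deg R A x ^+ l * gridE R k' l A (Ycol A x)
    <= B + (nat_of_bool (delta <= deg R A x))%:R.
  move=> x.
  have d0 := @deg_ge0 R X Y A x; have d1 := @deg_le1 R X Y A x hY.
  have N0 := @gridE_ge0 R X Y k' l A (Ycol A x).
  have N1 := @gridE_le1 R X Y k' l A (Ycol A x).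
  case: (boolP (delta <= deg R A x)) => hdx.
    apply: le_trans (_ : 1 <= _); last by rewrite lerDr.
    by rewrite mulr_ile1 ?exprn_ge0 ?exprn_ile1.
  rewrite addr0; rewrite -ltNge in hdx.
  case: (boolP (deg R A x < delta ^+ k'.+1)) => hdk.
    apply: le_trans (ler_piMr (exprn_ge0 _ d0) N1) _.
    apply: le_trans (_ : (delta ^+ k'.+1) ^+ l <= _).
      by apply: lerXn2r; [rewrite nnegrE | rewrite nnegrE exprn_ge0 // ltW | exact: ltW hdk].
    by rewrite -exprM /B ler_peMl // exprn_ge0 // ltW.
  rewrite -leNgt in hdk.
  have hk' : (1 < k'.+1)%N.
    rewrite ltnS lt0n; apply/negP => /eqP k0; move: hdk; rewrite k0 expr1 => hdk.
    by move: hdx; rewrite ltNge hdk.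
  have gl := key x hk' hdk.
  have m0 : (0 < k' * l)%N by rewrite muln_gt0 -ltnS hk' hl.
  have hN : gridE R k' l A (Ycol A x) <= ((1 + eps) * delta) ^+ (k' * l).
    rewrite -(@powR_inv_pow R _ (k' * l) N0 m0).
    apply: lerXn2r; last exact: ltW gl.
      by rewrite nnegrE powR_ge0.
    by rewrite nnegrE.
  apply: le_trans (_ : delta ^+ l * ((1 + eps) * delta) ^+ (k' * l) <= _).
    apply: ler_pM; rewrite ?exprn_ge0 //.
    by apply: lerXn2r; [rewrite nnegrE | rewrite nnegrE ltW | exact: ltW hdx].
  rewrite /B mulSn exprD exprMn le_eqVlt; apply/orP; left; apply/eqP; ring.
have hsum : \sum_x (deg R A x ^+ l * gridE R k' l A (Ycol A x))
    <= B * #|X|%:R + #|[set x : X | delta <= deg R A x]|%:R.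
  apply: le_trans (ler_sum _ (fun x _ => bound x)) _.
  by rewrite big_split /= sumr_const sum_bool mulr_natr.
have hX' : (#|X|%:R : R) != 0 by rewrite pnatr_eq0 -lt0n.
have hY' : (#|Y|%:R : R) != 0 by rewrite pnatr_eq0 -lt0n.
have heq : \sum_x (deg R A x ^+ l * gridE R k' l A (Ycol A x))
    = #|X|%:R * gridE R k'.+1 l A [set: Y].
  rewrite (eq_bigr _ (fun x _ => @term_eq R X Y k' l A x hX hY hl)).
  rewrite -mulr_suml gridE_gsum gsum_dec cardsT exprS.
  field; by rewrite !expf_neq0.
rewrite heq /B in hsum; clear bound B0.
set n := (#|X|%:R : R) in hsum hX' *.
set P := (#|[set x : X | delta <= deg R A x]|%:R : R) in hsum *.
set a := (1 + eps) ^+ (k' * l) in a1 hsum *.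
set D := delta ^+ (k'.+1 * l) in hsum *.
set b := (1 + eps) ^+ l.
have hb : 1 + eps <= b.
  exact: bern (ltW he) hl.
have ht' : ((1 + eps) * delta) ^+ (k'.+1 * l) = a * b * D.
  by rewrite exprMn /a /b /D mulSn !exprD; ring.
rewrite ht' in ht.
have n0 : 0 < n by rewrite ltr0n.
have D0 : 0 <= D by rewrite exprn_ge0 // ltW.
have h3 : eps <= a * (b - 1).
  apply: le_trans (_ : b - 1 <= _); first lra.
  by rewrite ler_peMl // subr_ge0 (le_trans _ hb) // lerDl ltW.
have h4 : 0 <= n * D by rewrite mulr_ge0 // ltW.
have h5 := ler_wpM2l h4 h3.
have h6 := ler_wpM2l (ltW n0) ht.
nra.
Qed.
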